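(* Run the UCB-like policy described in the context and let $\mathcal A$ be the event defined there. On the event $\mathcal A$, for every epoch $\ell\in\{1,\dots,q\}$, $$\sum_{i=1}^N\Big(\sqrt{n_i^{\ell-1}}\,\Big|\log\frac{\hat v_i^\ell}{v_i^*}\Big|-\Psi\Big)^2\le N\Psi^2,$$ and consequently $\big|\log(\hat v_i^\ell/v_i^* )\big|\le\varepsilon(n_i^{\ell-1})=\frac{(\sqrt N+1)\Psi}{\sqrt{n_i^{\ell-1}}}$ for all $i\in\mathcal N$.
   Context: Setting: $N$ products $\mathcal N=\{1,\dots,N\}$, a no-purchase option $0$, $K$ resources, horizon of $T$ periods. For $v\in\mathbb R_{>0}^N$ and $S\subseteq\mathcal N$ the MNL probabilities are $\varphi(i,S\mid v)=v_i/(1+\sum_{j\in S}v_j)$ for $i\in S$, $\varphi(0,S\mid v)=1/(1+\sum_{j\in S}v_j)$, $\varphi(i,S\mid v)=0$ for $i\in\mathcal N\setminus S$. The unknown true vector $v^*$ satisfies $v_i^*\in[1/R,R]$. In period $t$ the retailer offers $S_t\subseteq\mathcal N$ and the customer chooses $I_t\in S_t\cup\{0\}$ with conditional probability $\varphi(I_t,S_t\mid v^* )$ given the past. Product $i$ has revenue $r(i)\in[0,1]$ and consumption $a(i,k)\in[0,1]$ of resource $k$, resource $k$ has inventory $Tc(k)$. UCB-like policy: parameters $\tau$ (a multiple of $N$), switch budget $L$, $\delta\in(0,1)$, $q=\lfloor (L-N)/(K+1)\rfloor\ge1$; $\Psi=\frac{R(1+NR)^2}{2}\sqrt{2+4\log\frac{2T^{1/2}q(K+1)N}{\delta}}$,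 $\varepsilon(n)=(\sqrt N+1)\Psi/\sqrt n$. Warm start: for $i=1,\dots,N$ offer $S_t=\{i\}$ for $t=(i-1)\tau/N+1,\dots,i\tau/N$. Let $T_0=\tau$, $T_\ell=\ell\lfloor (T-\tau)/q\rfloor+\tau$. In epoch $\ell$: let $n_i^{\ell-1}=\sum_{t=1}^{T_{\ell-1}}\mathbb I(i\in S_t)$; the MLE is $\hat v^\ell=e^{\hat\theta}$ where $\hat\theta$ minimizes the negative log-likelihood $\mathcal L_{\ell-1}(\theta)=-\sum_{t=1}^{T_{\ell-1}}\big[\theta_{I_t}-\log(1+\sum_{i\in S_t}e^{\theta_i})\big]$ ($\theta_0:=0$) over $\theta$ with $e^{\theta_i}\in[1/R,R]$; the assortments in periods $T_{\ell-1}+1,\dots,T_\ell$ are then chosen (by solving an LP built from $\hat v^\ell$ and randomizing) based only on data up to $T_{\ell-1}$. Event: with $\theta^*=(\log v_i^* )_i$, $\mathcal A_{i,\ell}=\{|\partial\mathcal L_{\ell-1}/\partial\theta_i(\theta^* )|\le\sqrt{2n_i^{\ell-1}(1+2\log\frac{2\sqrt TqN}{\delta})}\}$ and $\mathcal A=\bigcap_{i=1}^N\bigcap_{\ell=1}^q\mathcal A_{i,\ell}$. *)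

(* Defs.v *)
From HB Require Import structures.
From mathcomp Require Import all_boot all_order all_algebra.
From mathcomp Require Import all_classical all_reals all_analysis.
Set Implicit Arguments. Unset Strict Implicit. Unset Printing Implicit Defensive.
Import Order.TTheory GRing.Theory Num.Theory.
Import numFieldNormedType.Exports.
Local Open Scope ring_scope.

Section Defs.
Variables (R : realType) (N : nat).

(* A sample path: assortment S t : {set 'I_N} offered in period t (t >= 1),
   choice I t : option 'I_N, where None is the no-purchase option 0. *)

Definition theta_choice (th : 'rV[R]_N) (c : option 'I_N) : R :=
  if c is Some i then th 0 i else 0.

Definition negloglik (S : nat -> {set 'I_N}) (I : nat -> option 'I_N)
  (m : nat) (th : 'rV[R]_N) : R :=
  - \sum_(1 <= t < m.+1)
      (theta_choice th (I t) - ln (1 + \sum_(i in S t) expR (th 0 i))).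

Definition offer_count (S : nat -> {set 'I_N}) (m : nat) (i : 'I_N) : nat :=
  (\sum_(1 <= t < m.+1) (i \in S t))%N.

Definition in_box (Rb : R) (th : 'rV[R]_N) : Prop :=
  forall i : 'I_N, Rb^-1 <= expR (th 0 i) <= Rb.

Definition is_MLE S I (Rb : R) (m : nat) (th : 'rV[R]_N) : Prop :=
  in_box Rb th /\ forall th', in_box Rb th' -> negloglik S I m th <= negloglik S I m th'.

Definition dnegloglik S I (m : nat) (i : 'I_N) (th : 'rV[R]_N) : R :=
  'D_(delta_mx 0 i) (negloglik S I m) th.

End Defs.

Definition epoch_end (T tau q l : nat) : nat := (l * ((T - tau) %/ q) + tau)%N.

Definition num_epochs (Lsw N K : nat) : nat := ((Lsw - N) %/ K.+1)%N.

Definition Psi (R : realType) (Rb : R) (N T K q : nat) (delta : R) : R :=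
  Rb * (1 + N%:R * Rb) ^+ 2 / 2 *
  Num.sqrt (2 + 4 * ln (2 * Num.sqrt T%:R * q%:R * K.+1%:R * N%:R / delta)).

Definition eps_conf (R : realType) (N : nat) (psi : R) (n : nat) : R :=
  (Num.sqrt N%:R + 1) * psi / Num.sqrt n%:R.

(* warm start: for i = 1..N, S_t = {i} for t = (i-1)tau/N+1 .. i tau/N
   (products indexed 0..N-1 here) *)
Definition warm_start N (tau : nat) (S : nat -> {set 'I_N}) : Prop :=
  forall (i : 'I_N) (t : nat),
    (i * (tau %/ N) < t <= i.+1 * (tau %/ N))%N -> S t = [set i].

Definition event_A (R : realType) N S I (vstar : 'rV[R]_N) (T q tau : nat)
  (delta : R) : Prop :=
  forall (i : 'I_N) (l : nat), (1 <= l <= q)%N ->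
    let m := epoch_end T tau q l.-1 in
    `| dnegloglik S I m i (map_mx (@ln R) vstar) |
      <= Num.sqrt (2 * (offer_count S m i)%:R *
           (1 + 2 * ln (2 * Num.sqrt T%:R * q%:R * N%:R / delta))).

(* Main.v *)
Require Import Defs.
From HB Require Import structures.
From mathcomp Require Import all_boot all_order all_algebra.
From mathcomp Require Import all_classical all_reals all_analysis.
From mathcomp Require Import ring lra.
Import Order.TTheory GRing.Theory Num.Theory.
Import numFieldNormedType.Exports.
Local Open Scope ring_scope.
Section X.
Variable R : realType.

Lemma is_derive_ext (f g : R -> R) (x df : R) :
  f =1 g -> is_derive x 1 f df -> is_derive x 1 g df.
Proof. by move=> /funext ->. Qed.

Lemma is_derive_aff (a b s : R) : is_derive s 1 (fun x => a + x * b) b.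
Proof.
apply: (@is_derive_ext (cst a + b \*: id)).
  by move=> x /=; rewrite mulrC.
have := (is_deriveD (is_derive_cst a s 1) (is_deriveZ b (is_derive_id s 1))). move=> H. apply: is_derive_eq H _.
by rewrite add0r /= /GRing.scale /= mulr1.
Qed.

Lemma is_derive_expaff (a b s : R) :
  is_derive s 1 (fun x => expR (a + x * b)) (expR (a + s * b) * b).
Proof.
apply: (@is_derive_ext (expR \o (fun x => a + x * b))) => //.
exact: (is_derive1_comp (is_derive_expR _) (is_derive_aff a b s)).
Qed.

Lemma is_derive_lnf (f : R -> R) (x df : R) : 0 < f x ->
  is_derive x 1 f df -> is_derive x 1 (fun y => ln (f y)) (df / f x).
Proof.
move=> fx0 H.
have H2 := is_derive1_comp (@is_derive1_ln _ (f x) fx0) H.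
eapply is_derive_ext; last first.
  apply: is_derive_eq H2 _; by rewrite mulrC.
by [].
Qed.

Lemma is_derive_bigsum (T : Type) (r : seq T) (P : pred T) (F : T -> R -> R)
   (dF : T -> R) (x : R) :
  (forall i, P i -> is_derive x 1 (F i) (dF i)) ->
  is_derive x 1 (fun y => \sum_(i <- r | P i) F i y) (\sum_(i <- r | P i) dF i).
Proof.
move=> H; elim: r => [|a r IH].
  apply: (@is_derive_ext (cst 0)); first by move=> y; rewrite big_nil.
  by rewrite big_nil; exact: is_derive_cst.
rewrite big_cons; case: ifP => Pa.
  apply: (@is_derive_ext (F a + (fun y => \sum_(i <- r | P i) F i y))).
    by move=> y; rewrite big_cons Pa.
  exact: (is_deriveD (H a Pa) IH).
apply: (@is_derive_ext (fun y => \sum_(i <- r | P i) F i y)) => //.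
by move=> y; rewrite big_cons Pa.
Qed.

Lemma is_derive_div (f g : R -> R) (x df dg : R) : g x != 0 ->
  is_derive x 1 f df -> is_derive x 1 g dg ->
  is_derive x 1 (fun y => f y / g y) ((df * g x - f x * dg) / (g x) ^+ 2).
Proof.
move=> gx0 Hf Hg.
have Hv := is_deriveV gx0 Hg.
apply: (@is_derive_ext (f * (fun y => (g y)^-1))) => //.
have H2 := is_deriveM Hf Hv.
apply: is_derive_eq H2 _.
rewrite /GRing.scale /=. field. done.
Qed.
End X.

Section CS.
Variables (R : realType) (N : nat).
Lemma cs_ineq (A : {set 'I_N}) (w x : 'I_N -> R) : (forall j, 0 <= w j) ->
  (\sum_(j in A) w j * x j) ^+ 2 <= (\sum_(j in A) w j) * (\sum_(j in A) w j * x j ^+ 2).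
Proof.
move=> w0.
set W := \sum_(j in A) w j; set P := \sum_(j in A) w j * x j;
set Q := \sum_(j in A) w j * x j ^+ 2.
have key k : \sum_(j in A) w j * (x j - x k) ^+ 2 = Q - P * (2 * x k) + W * x k ^+ 2.
  rewrite (eq_bigr (fun j => (w j * x j ^+ 2 - (w j * x j) * (2 * x k)) + w j * x k ^+ 2)).
    by rewrite big_split /= sumrB -mulr_suml -mulr_suml.
  by move=> j _; ring.
have H0 : 0 <= \sum_(k in A) w k * \sum_(j in A) w j * (x j - x k) ^+ 2.
  apply: sumr_ge0 => k _; apply: mulr_ge0 => //; apply: sumr_ge0 => j _.
  by apply: mulr_ge0 => //; exact: sqr_ge0.
have H1 : \sum_(k in A) w k * \sum_(j in A) w j * (x j - x k) ^+ 2
     = W * Q - (P * (2 * P)) + Q * W.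
  rewrite (eq_bigr (fun k => (w k * Q - (w k * x k) * (2 * P)) + (w k * x k ^+ 2) * W)).
    by rewrite big_split /= sumrB -!mulr_suml.
  by move=> k _; rewrite key; ring.
rewrite H1 in H0.
nra.
Qed.
End CS.

Arguments is_derive_ext {R}.
Arguments is_derive_aff {R}.
Arguments is_derive_expaff {R}.
Arguments is_derive_lnf {R f x df}.
Arguments is_derive_bigsum {R}.
Arguments is_derive_div {R f g x df dg}.

Section M.
Variables (R : realType) (N : nat) (S : nat -> {set 'I_N}) (I : nat -> option 'I_N) (m : nat).

Definition E (th d : 'rV[R]_N) (s : R) (j : 'I_N) := expR (th 0 j + s * d 0 j).
Definition Bt (th d : 'rV[R]_N) (s : R) (t : nat) := 1 + \sum_(j in S t) E th d s j.
Definition At (th d : 'rV[R]_N) (s : R) (t : nat) := \sum_(j in S t) E th d s j * d 0 j.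
Definition Ct (th d : 'rV[R]_N) (s : R) (t : nat) := \sum_(j in S t) E th d s j * d 0 j ^+ 2.
Definition Gs (th d : 'rV[R]_N) (s : R) := - \sum_(1 <= t < m.+1)
   (theta_choice d (I t) - At th d s t / Bt th d s t).
Definition Hs (th d : 'rV[R]_N) (s : R) := \sum_(1 <= t < m.+1)
   ((Ct th d s t * Bt th d s t - At th d s t * At th d s t) / Bt th d s t ^+ 2).

Lemma Bt_gt0 (th d : 'rV[R]_N) (s : R) (t : nat) : 0 < Bt th d s t.
Proof.
rewrite /Bt; apply: (lt_le_trans ltr01); rewrite lerDl.
by apply: sumr_ge0 => j _; exact/ltW/expR_gt0.
Qed.

Lemma nll_line (th d : 'rV[R]_N) :
  (fun s => - \sum_(1 <= t < m.+1) (theta_choice th (I t) + s * theta_choice d (I t)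
       - ln (Bt th d s t))) =1 (fun s => negloglik S I m (th + s *: d)).
Proof.
move=> s; rewrite /negloglik; congr (- _); apply: eq_bigr => t _.
congr (_ - ln _).
  by case: (I t) => [i|] /=; rewrite ?mxE ?mulr0 ?addr0.
rewrite /Bt; congr (1 + _); apply: eq_bigr => j _; by rewrite /E !mxE.
Qed.

Lemma deriv_Bt (th d : 'rV[R]_N) (s : R) (t : nat) : is_derive s 1 (fun y => Bt th d y t) (At th d s t).
Proof.
have H1 := @is_derive_bigsum R _ (index_enum 'I_N) (fun j => j \in S t)
   (fun j y => E th d y j) (fun j => E th d s j * d 0 j) s
   (fun j _ => is_derive_expaff _ _ _).
have H2 := is_deriveD (is_derive_cst (1:R) s 1) H1.
eapply is_derive_ext; last first.
  apply: is_derive_eq H2 _; by rewrite add0r.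
by [].
Qed.

Lemma deriv_At (th d : 'rV[R]_N) (s : R) (t : nat) : is_derive s 1 (fun y => At th d y t) (Ct th d s t).
Proof.
have H1 := @is_derive_bigsum R _ (index_enum 'I_N) (fun j => j \in S t)
   (fun j y => d 0 j *: E th d y j) (fun j => d 0 j *: (E th d s j * d 0 j)) s
   (fun j _ => is_deriveZ (d 0 j) (is_derive_expaff _ _ _)).
eapply is_derive_ext; last first.
  apply: is_derive_eq H1 _; rewrite /Ct; apply: eq_bigr => j _.
  by rewrite /GRing.scale /= mulrC -mulrA -expr2.
by move=> y; rewrite /At; apply: eq_bigr => j _; rewrite /GRing.scale /= mulrC.
Qed.

Lemma deriv_nll (th d : 'rV[R]_N) (s : R) :
  is_derive s 1 (fun s => negloglik S I m (th + s *: d)) (Gs th d s).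
Proof.
have Ht : forall t, (fun _ => true) t -> is_derive s 1
   (fun y => theta_choice th (I t) + y * theta_choice d (I t) - ln (Bt th d y t))
   (theta_choice d (I t) - At th d s t / Bt th d s t).
  move=> t _.
  have H1 := is_deriveB (is_derive_aff (theta_choice th (I t)) (theta_choice d (I t)) s)
     (@is_derive_lnf _ (fun y => Bt th d y t) s _ (Bt_gt0 th d s t) (deriv_Bt th d s t)).
  eapply is_derive_ext; last exact: H1.
  by [].
have H := is_deriveN (@is_derive_bigsum R _ (index_iota 1 m.+1) (fun _ => true) _ _ s Ht).
eapply is_derive_ext; first exact: nll_line.
eapply is_derive_ext; last exact: H.
by [].
Qed.

Lemma deriv_Gs (th d : 'rV[R]_N) (s : R) : is_derive s 1 (Gs th d) (Hs th d s).
Proof.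
have Ht : forall t, (fun _ => true) t -> is_derive s 1
   (fun y => theta_choice d (I t) - At th d y t / Bt th d y t)
   (0 - (Ct th d s t * Bt th d s t - At th d s t * At th d s t) / Bt th d s t ^+ 2).
  move=> t _.
  have H1 := is_deriveB (is_derive_cst (theta_choice d (I t)) s 1)
     (@is_derive_div _ (fun y => At th d y t) (fun y => Bt th d y t) s _ _ (lt0r_neq0 (Bt_gt0 th d s t)) (deriv_At th d s t) (deriv_Bt th d s t)).
  eapply is_derive_ext; last exact: H1.
  by [].
have H := is_deriveN (@is_derive_bigsum R _ (index_iota 1 m.+1) (fun _ => true) _ _ s Ht).
eapply is_derive_ext; last first.
  apply: is_derive_eq H _.
  by rewrite /Hs -sumrN; apply: eq_bigr => t _; rewrite sub0r opprK.
by [].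
Qed.

Lemma D_eq (th d : 'rV[R]_N) : 'D_d (negloglik S I m) th = Gs th d 0.
Proof.
have H := deriv_nll th d 0.
rewrite -(@derive_val _ _ _ _ _ _ _ H).
rewrite /derive.
have E1 : th + 0 *: d = th by rewrite scale0r addr0.
rewrite E1.
have E2 : (negloglik S I m \o shift th) \o ( *:%R^~ d) =
   ((fun s : R => negloglik S I m (th + s *: d)) \o shift 0) \o (fun h => h%:A).
  apply/funext => h /=; by rewrite addr0 /GRing.scale /= mulr1 addrC.
f_equal. f_equal. apply/funext => h /=.
congr (_ *: (negloglik S I m _ - _)).
by rewrite addr0 addrC /GRing.scale /= mulr1.
Qed.


Lemma term_lb (Rb : R) (th d : 'rV[R]_N) (s : R) (t : nat) : 0 < Rb ->
  (forall j, Rb^-1 <= E th d s j <= Rb) ->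
  (Rb * (1 + N%:R * Rb) ^+ 2)^-1 * \sum_(j in S t) d 0 j ^+ 2 <=
  (Ct th d s t * Bt th d s t - At th d s t * At th d s t) / Bt th d s t ^+ 2.
Proof.
move=> Rb0 box.
have W0 : 0 <= \sum_(j in S t) E th d s j.
  by apply: sumr_ge0 => j _; exact/ltW/expR_gt0.
have WN : \sum_(j in S t) E th d s j <= N%:R * Rb.
  rewrite big_mkcond /=.
  apply: (@le_trans _ _ (\sum_(j < N) Rb)); last first.
    by rewrite sumr_const card_ord mulr_natl.
  apply: ler_sum => j _; case: ifP => _; first by case/andP: (box j).
  exact: ltW.
have cs := @cs_ineq R N (S t) (E th d s) (fun j => d 0 j) (fun j => ltW (expR_gt0 _)).
have C0 : Rb^-1 * \sum_(j in S t) d 0 j ^+ 2 <= Ct th d s t.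
  rewrite mulr_sumr /Ct; apply: ler_sum => j _.
  by rewrite ler_wpM2r ?sqr_ge0 //; case/andP: (box j).
have D0 : 0 <= Rb^-1 * \sum_(j in S t) d 0 j ^+ 2.
  apply: mulr_ge0; first by rewrite invr_ge0 ltW.
  by apply: sumr_ge0 => j _; exact: sqr_ge0.
rewrite /Bt /At /Ct in cs C0 *.
set W := \sum_(j in S t) E th d s j in W0 WN cs C0 *.
set P := \sum_(j in S t) E th d s j * d 0 j in cs *.
set Q := \sum_(j in S t) E th d s j * d 0 j ^+ 2 in cs C0 *.
set K := Rb^-1 * \sum_(j in S t) d 0 j ^+ 2 in C0 D0 *.
have -> : (Rb * (1 + N%:R * Rb) ^+ 2)^-1 * \sum_(j in S t) d 0 j ^+ 2
   = K / (1 + N%:R * Rb) ^+ 2.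
  by rewrite /K invfM mulrAC.
have B0 : 0 < (1 + W) ^+ 2 by apply: exprn_gt0; lra.
have NB0 : 0 < (1 + N%:R * Rb) ^+ 2.
  by apply: exprn_gt0; apply: (@lt_le_trans _ _ (1 + W)); lra.
rewrite ler_pdivlMr //.
have : K / (1 + N%:R * Rb) ^+ 2 * (1 + W) ^+ 2 <= K.
  rewrite -mulrA; apply: ler_piMr => //.
  rewrite mulrC ler_pdivrMr // mul1r.
  rewrite ler_sqr ?nnegrE; lra.
move=> H; apply: (le_trans H).
rewrite expr2 in cs; nra.
Qed.

Lemma sum_exch (f : 'I_N -> R) :
  \sum_(j < N) (offer_count S m j)%:R * f j =
  \sum_(1 <= t < m.+1) \sum_(j in S t) f j.
Proof.
rewrite /offer_count.
under eq_bigr do rewrite natr_sum mulr_suml.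
rewrite exchange_big /=; apply: eq_bigr => t _.
rewrite [RHS]big_mkcond /=; apply: eq_bigr => j _.
by case: (j \in S t); rewrite /= ?mul1r ?mul0r.
Qed.

Lemma Hs_lb (Rb : R) (th d : 'rV[R]_N) (s : R) : 0 < Rb ->
  (forall j, Rb^-1 <= E th d s j <= Rb) ->
  (Rb * (1 + N%:R * Rb) ^+ 2)^-1 * \sum_(j < N) (offer_count S m j)%:R * d 0 j ^+ 2
    <= Hs th d s.
Proof.
move=> Rb0 box; rewrite sum_exch mulr_sumr /Hs; apply: ler_sum => t _.
exact: term_lb.
Qed.

Lemma E0 (th d : 'rV[R]_N) j : E th d 0 j = expR (th 0 j).
Proof. by rewrite /E mul0r addr0. Qed.

Lemma dexp (d : 'rV[R]_N) k : d 0 k = \sum_(i < N) d 0 i * (delta_mx 0 i : 'rV[R]_N) 0 k.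
Proof.
rewrite (bigD1 k) //= mxE eqxx /= eqxx mulr1 big1 ?addr0 // => i ik.
by rewrite mxE eq_sym (negbTE ik) andbF mulr0.
Qed.

Lemma Gs_lin (th d : 'rV[R]_N) :
  Gs th d 0 = \sum_(i < N) d 0 i * Gs th (delta_mx 0 i) 0.
Proof.
have tcE c : theta_choice d c = \sum_(i < N) d 0 i * theta_choice (delta_mx 0 i) c.
  case: c => [k|] /=; first exact: dexp.
  by rewrite big1 // => i _; rewrite mulr0.
have AE t : At th d 0 t = \sum_(i < N) d 0 i * At th (delta_mx 0 i) 0 t.
  rewrite /At; under eq_bigr do rewrite dexp mulr_sumr.
  rewrite exchange_big /=; apply: eq_bigr => i _; rewrite mulr_sumr.
  by apply: eq_bigr => j _; rewrite !E0 mulrCA.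
have BE t i : Bt th (delta_mx 0 i) 0 t = Bt th d 0 t.
  by rewrite /Bt; congr (1 + _); apply: eq_bigr => j _; rewrite !E0.
rewrite /Gs.
under [RHS]eq_bigr do rewrite mulrN mulr_sumr.
rewrite sumrN; congr (- _); rewrite exchange_big /=; apply: eq_bigr => t _.
rewrite tcE AE mulr_suml -sumrB; apply: eq_bigr => i _.
by rewrite BE mulrBr mulrA.
Qed.

Lemma box_iff (Rb x : R) : 0 < Rb ->
  (Rb^-1 <= expR x <= Rb) = (ln (Rb^-1) <= x <= ln Rb).
Proof.
move=> Rb0.
have Rp : Rb \is Num.pos by rewrite posrE.
have Rip : Rb^-1 \is Num.pos by rewrite posrE invr_gt0.
by rewrite -{1}(lnK Rip) -{2}(lnK Rp) !ler_expR.
Qed.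

Lemma line_box (Rb : R) (ths thh : 'rV[R]_N) (s : R) : 0 < Rb ->
  in_box Rb ths -> in_box Rb thh -> 0 <= s <= 1 ->
  forall j, Rb^-1 <= E ths (thh - ths) s j <= Rb.
Proof.
move=> Rb0 b1 b2 /andP [s0 s1] j; rewrite /E box_iff //.
move: (b1 j) (b2 j); rewrite !box_iff // !mxE => /andP [h1 h2] /andP [h3 h4].
set a := ths 0 j in h1 h2 *; set b := thh 0 j in h3 h4 *.
apply/andP; split; nra.
Qed.

Lemma line_in_box (Rb : R) (ths thh : 'rV[R]_N) (s : R) : 0 < Rb ->
  in_box Rb ths -> in_box Rb thh -> 0 <= s <= 1 ->
  in_box Rb (ths + s *: (thh - ths)).
Proof.
move=> Rb0 b1 b2 hs j.
have := @line_box Rb ths thh s Rb0 b1 b2 hs j; by rewrite /E !mxE.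
Qed.

Lemma key_ineq (Rb : R) (ths thh : 'rV[R]_N) : 0 < Rb ->
  in_box Rb ths -> is_MLE S I Rb m thh ->
  Gs ths (thh - ths) 0 + (Rb * (1 + N%:R * Rb) ^+ 2)^-1 *
     \sum_(j < N) (offer_count S m j)%:R * (thh - ths) 0 j ^+ 2 <= 0.
Proof.
move=> Rb0 b1 [b2 mle].
set d := thh - ths.
set c := (Rb * (1 + N%:R * Rb) ^+ 2)^-1.
set Q := \sum_(j < N) (offer_count S m j)%:R * d 0 j ^+ 2.
have c0 : 0 < c.
  rewrite /c invr_gt0; apply: mulr_gt0 => //; apply: exprn_gt0.
  apply: (@lt_le_trans _ _ 1) => //; rewrite lerDl; apply: mulr_ge0 => //; exact: ltW.
have Q0 : 0 <= Q by apply: sumr_ge0 => j _; apply: mulr_ge0 => //; exact: sqr_ge0.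
set phi := fun s : R => negloglik S I m (ths + s *: d).
have phi1 : phi 1 = negloglik S I m thh by rewrite /phi scale1r /d addrC subrK.
have step : forall s, 0 <= s < 1 -> Gs ths d 0 + c * Q * s <= 0.
  move=> s /andP [s0 s1].
  have cont := @derivable_within_continuous R _ phi `[s, 1]
     (fun x _ => @ex_derive _ _ _ _ _ _ _ (deriv_nll ths d x)).
  have [xi xiP Hxi] := MVT s1 (fun x _ => deriv_nll ths d x) cont.
  move: xiP; rewrite in_itv /= => /andP [sxi xi1].
  have Gxi : Gs ths d xi <= 0.
    have : phi 1 - phi s <= 0.
      rewrite phi1 subr_le0; apply: mle; apply: line_in_box => //.
      by apply/andP; split => //; exact: ltW.
    rewrite Hxi pmulr_lle0 //; by rewrite subr_gt0.
  have cont2 := @derivable_within_continuous R _ (Gs ths d) `[0, xi]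
     (fun x _ => @ex_derive _ _ _ _ _ _ _ (deriv_Gs ths d x)).
  have [eta etaP Heta] := MVT_segment (ltW (le_lt_trans s0 sxi))
     (fun x _ => deriv_Gs ths d x) cont2.
  move: etaP; rewrite in_itv /= => /andP [eta0 etaxi].
  have Hb : c * Q <= Hs ths d eta.
    apply: Hs_lb => //; apply: line_box => //.
    by apply/andP; split => //; apply: ltW; apply: le_lt_trans xi1.
  have xi0 : 0 <= xi by apply: le_trans s0 (ltW sxi).
  have : Gs ths d xi - Gs ths d 0 >= c * Q * xi.
    by rewrite Heta subr0; apply: ler_wpM2r.
  have : c * Q * s <= c * Q * xi.
    by apply: ler_wpM2l => //; [apply: mulr_ge0 => //; exact: ltW | exact: ltW].
  lra.
apply/ler_addgt0Pr => e e0; rewrite add0r.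
have cQ0 : 0 <= c * Q by apply: mulr_ge0 => //; exact: ltW.
set s := c * Q / (e + c * Q).
have ecQ : 0 < e + c * Q by lra.
have s0 : 0 <= s by apply: divr_ge0 => //; exact: ltW.
have s1 : s < 1 by rewrite /s ltr_pdivrMr // mul1r; lra.
have : 0 <= s < 1 by rewrite s0 s1.
move=> /step.
have : c * Q - c * Q * s <= e.
  have -> : c * Q - c * Q * s = c * Q * e / (e + c * Q).
    by rewrite /s; field; rewrite lt0r_neq0.
  rewrite ler_pdivrMr //; nra.
lra.
Qed.

End M.

Lemma offer_pos (N tau m : nat) (S : nat -> {set 'I_N}) (i : 'I_N) :
  (0 < tau)%N -> (N %| tau)%N -> (tau <= m)%N -> warm_start tau S ->
  (1 <= offer_count S m i)%N.
Proof.
move=> tau0 Ntau taum ws.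
have N0 : (0 < N)%N by case: i => k; case: N {S ws Ntau} => //.
have q0 : (0 < tau %/ N)%N by rewrite divn_gt0 // dvdn_leq.
set t0 := (i.+1 * (tau %/ N))%N.
have St0 : S t0 = [set i].
  apply: ws; apply/andP; split; last by [].
  by rewrite /t0 ltn_pmul2r.
have t0m : (t0 <= m)%N.
  apply: leq_trans taum; rewrite /t0 -{2}(divnK Ntau) [X in (_ <= X)%N]mulnC leq_pmul2r //.
have t01 : (1 <= t0)%N by rewrite /t0 muln_gt0 q0.
rewrite /offer_count (bigD1_seq t0) /=; last exact: iota_uniq.
  by rewrite St0 set11.
by rewrite mem_index_iota t01 ltnS.
Qed.

Theorem theorem6 (R : realType) (N K T tau Lsw : nat) (Rb delta : R)
    (vstar : 'rV[R]_N) (S : nat -> {set 'I_N}) (I : nat -> option 'I_N) :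
  (0 < N)%N -> (0 < T)%N ->
  (0 < tau)%N -> (N %| tau)%N -> (tau <= T)%N ->
  (1 <= num_epochs Lsw N K)%N ->
  0 < delta < 1 -> 0 < Rb ->
  (forall i : 'I_N, Rb^-1 <= vstar 0 i <= Rb) ->
  warm_start tau S ->
  (forall t : nat, (1 <= t)%N ->
     match I t with Some i => i \in S t | None => true end) ->
  let q := num_epochs Lsw N K in
  let psi := Psi Rb N T K q delta in
  event_A S I vstar T q tau delta ->
  forall l : nat, (1 <= l <= q)%N ->
  let m := epoch_end T tau q l.-1 in
  forall thhat : 'rV[R]_N, is_MLE S I Rb m thhat ->
    \sum_(i < N) (Num.sqrt (offer_count S m i)%:R
                    * `| ln (expR (thhat 0 i) / vstar 0 i) | - psi) ^+ 2
      <= N%:R * psi ^+ 2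
    /\ forall i : 'I_N,
         `| ln (expR (thhat 0 i) / vstar 0 i) | <= eps_conf N psi (offer_count S m i).
Proof.
move=> N0 T0 tau0 Ntau tauT q1 /andP [d0 d1] Rb0 vbox ws _ q psi HA l hl m thh hmle.
set ths := map_mx (@ln R) vstar.
have vpos j : 0 < vstar 0 j.
  by case/andP: (vbox j) => h _; apply: lt_le_trans h; rewrite invr_gt0.
have bths : in_box Rb ths.
  by move=> j; rewrite mxE lnK ?posrE //.
have KI := @key_ineq R N S I m Rb ths thh Rb0 bths hmle.
set D := thh - ths in KI.
have lnE j : ln (expR (thh 0 j) / vstar 0 j) = D 0 j.
  by rewrite lnM ?posrE ?expR_gt0 ?invr_gt0 // expRK lnV ?posrE // /D /ths !mxE.
have taum : (tau <= m)%N by rewrite /m /epoch_end leq_addl.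
have npos j : 0 < Num.sqrt ((offer_count S m j)%:R : R).
  by rewrite sqrtr_gt0 ltr0n (@offer_pos N tau m S j tau0 Ntau taum ws).
set Bq := Num.sqrt (2 + 4 * ln (2 * Num.sqrt T%:R * q%:R * K.+1%:R * N%:R / delta)).
have Bq0 : 0 <= Bq by exact: sqrtr_ge0.
have hg i : `|dnegloglik S I m i ths| <= Num.sqrt (offer_count S m i)%:R * Bq.
  have h := HA i l hl; rewrite /= -/m in h.
  apply: (le_trans h).
  rewrite /Bq -sqrtrM ?ler0n //; apply: ler_wsqrtr.
  set X := 2 * Num.sqrt T%:R * q%:R * N%:R / delta.
  have sT : 0 < Num.sqrt (T%:R : R) by rewrite sqrtr_gt0 ltr0n.
  have X0 : 0 < X.
    rewrite /X; apply: divr_gt0 => //; apply: mulr_gt0; last by rewrite ltr0n.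
    apply: mulr_gt0; last by rewrite ltr0n.
    by apply: mulr_gt0.
  have -> : 2 * Num.sqrt T%:R * q%:R * K.+1%:R * N%:R / delta = X * K.+1%:R.
    by rewrite /X; field; rewrite lt0r_neq0.
  have lnXY : ln X <= ln (X * K.+1%:R).
    rewrite ler_ln ?posrE //; last by apply: mulr_gt0 => //; rewrite ltr0n.
    by apply: ler_peMr; [exact: ltW | rewrite ler1n].
  have n0 : 0 <= (offer_count S m i)%:R :> R by rewrite ler0n.
  nra.
have gE i : dnegloglik S I m i ths = Gs R N S I m ths (delta_mx 0 i) 0 := @D_eq R N S I m ths _.
rewrite Gs_lin in KI.
set a := fun j => Num.sqrt (offer_count S m j)%:R * `|D 0 j|.
have a0 j : 0 <= a j by apply: mulr_ge0; [exact: sqrtr_ge0 | exact: normr_ge0].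
set c := (Rb * (1 + N%:R * Rb) ^+ 2)^-1 in KI.
set M := Rb * (1 + N%:R * Rb) ^+ 2.
have M0 : 0 < M.
  rewrite /M; apply: mulr_gt0 => //; apply: exprn_gt0.
  apply: (@lt_le_trans _ _ 1) => //; rewrite lerDl; apply: mulr_ge0 => //; exact: ltW.
have QE : \sum_(j < N) (offer_count S m j)%:R * D 0 j ^+ 2 = \sum_(j < N) a j ^+ 2.
  apply: eq_bigr => j _; rewrite /a exprMn sqr_sqrtr ?ler0n // real_normK //.
  exact: num_real.
rewrite QE in KI.
have sum1 : c * \sum_(j < N) a j ^+ 2 <= Bq * \sum_(j < N) a j.
  have : c * \sum_(j < N) a j ^+ 2 <= - \sum_(i < N) D 0 i * Gs R N S I m ths (delta_mx 0 i) 0.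
    by move: KI; set u := \sum_(i < N) _; lra.
  move=> h; apply: (le_trans h); rewrite -sumrN mulr_sumr; apply: ler_sum => i _.
  rewrite -gE; apply: (le_trans (ler_norm _)); rewrite normrN normrM.
  apply: (le_trans (ler_wpM2l (normr_ge0 _) (hg i))).
  rewrite /a.
  have -> : Bq * (Num.sqrt (offer_count S m i)%:R * `|D 0 i|)
     = `|D 0 i| * (Num.sqrt (offer_count S m i)%:R * Bq) by ring.
  by [].
have psiE : psi = M / 2 * Bq by [].
have sum2 : \sum_(j < N) a j ^+ 2 <= 2 * psi * \sum_(j < N) a j.
  have -> : \sum_(j < N) a j ^+ 2 = M * (c * \sum_(j < N) a j ^+ 2).
    by rewrite /c -/M mulrA mulfV ?mul1r // lt0r_neq0.
  rewrite psiE.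
  have -> : 2 * (M / 2 * Bq) * \sum_(j < N) a j = M * (Bq * \sum_(j < N) a j).
    by field.
  by apply: ler_wpM2l => //; exact: ltW.
have psi0 : 0 <= psi.
  rewrite psiE; apply: mulr_ge0 => //; apply: divr_ge0 => //; exact: ltW.
have part1 : \sum_(i < N) (a i - psi) ^+ 2 <= N%:R * psi ^+ 2.
  have -> : \sum_(i < N) (a i - psi) ^+ 2
      = \sum_(i < N) a i ^+ 2 - 2 * psi * \sum_(i < N) a i + N%:R * psi ^+ 2.
    rewrite (eq_bigr (fun i => (a i ^+ 2 - a i * (2 * psi)) + psi ^+ 2)); last first.
      by move=> i _; ring.
    rewrite big_split /= sumrB -mulr_suml sumr_const card_ord mulr_natl.
    by rewrite -mulr_natl; ring.
  lra.
have lnE' : forall i, Num.sqrt (offer_count S m i)%:R * `|ln (expR (thh 0 i) / vstar 0 i)| = a i.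
  by move=> i; rewrite lnE.
split.
  by under eq_bigr => i _ do rewrite lnE'.
move=> i; rewrite lnE /eps_conf.
have hi : (a i - psi) ^+ 2 <= N%:R * psi ^+ 2.
  apply: le_trans part1.
  rewrite (bigD1 i) //= lerDl; apply: sumr_ge0 => j _; exact: sqr_ge0.
have sN0 : 0 <= Num.sqrt (N%:R : R) := sqrtr_ge0 _.
have sN2 : Num.sqrt (N%:R : R) ^+ 2 = N%:R by rewrite sqr_sqrtr ?ler0n.
have ai : a i <= (Num.sqrt N%:R + 1) * psi.
  rewrite -sN2 -exprMn in hi.
  have v0 : 0 <= Num.sqrt (N%:R : R) * psi by apply: mulr_ge0.
  have : a i - psi <= Num.sqrt (N%:R : R) * psi.
    case: (leP (a i - psi) 0) => h; first by apply: le_trans h v0.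
    by rewrite -ler_sqr ?nnegrE //; exact: ltW.
  lra.
rewrite ler_pdivlMr //; move: ai; rewrite /a; lra.
Qed.
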